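(* Let $\mathcal H_S$, $\mathcal K$ be Hilbert spaces, $\mathcal B_S=\mathcal B(\mathcal H_S)$, $\mathcal F=\Gamma(L^2(\mathbb R,\mathcal K))$, let $\mathcal S_0\subseteq L^2(\mathbb R,\mathcal K)$ be a totalizing set, and let $r<s<t$. Let $(Q_{f,g})$ be a completely positive kernel on $\mathcal B_S$ based on $\chi_{[r,s]}\mathcal S_0$ and $(P_{f,g})$ a completely positive kernel on $\mathcal B_S$ based on $\chi_{[s,t]}\mathcal S_0$, and for $f,g\in\mathcal S_0$ put $Q_{f,g}:=Q_{\chi_{[r,s]}f,\chi_{[r,s]}g}$ and $P_{f,g}:=P_{\chi_{[s,t]}f,\chi_{[s,t]}g}$. Then the family $\{Q_{f,g}\circ P_{f,g}:f,g\in\mathcal S_0\}$ (composition of maps $\mathcal B_S\to\mathcal B_S$) is a completely positive kernel on $\mathcal B_S$.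
   Context: $\psi_f=\sum_{k\ge0}f^{\otimes k}/\sqrt{k!}$ is the exponential vector; $\mathcal S_0$ is totalizing if $\{\psi_f:f\in\mathcal S_0\}$ is total in $\mathcal F$; $\chi_I\mathcal S_0=\{\chi_If:f\in\mathcal S_0\}$. A completely positive kernel on a $C^*$-algebra $\mathcal B$ based on a set $\mathcal S$ is a family $\{P_{f,g}:f,g\in\mathcal S\}$ of linear maps $\mathcal B\to\mathcal B$ such that for every $n$, $f_1,\dots,f_n\in\mathcal S$, $b_1,\dots,b_n\in\mathcal B$, the map $x\mapsto\sum_{j,k}b_j^*P_{f_j,f_k}(x)b_k$ is completely positive. *)

(* Defs.v *)
From HB Require Import structures.
From mathcomp Require Import all_boot all_order all_algebra.
From mathcomp Require Import complex.
From mathcomp Require Import reals.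
Set Implicit Arguments. Unset Strict Implicit. Unset Printing Implicit Defensive.
Import Order.TTheory GRing.Theory Num.Theory.
Local Open Scope ring_scope.

Section Hilbert.
Variable R : realType.
Local Notation C := (complex R).
Variable H : lmodType C.
(* inner product, conjugate-linear in the first, linear in the second argument *)
Variable ip : H -> H -> C.

Definition is_hilbert : Prop :=
  [/\ (forall x y z (a : C), ip x (a *: y + z) = a * ip x y + ip x z),
      (forall x y, ip y x = (ip x y)^*),
      (forall x, 0 <= ip x x),
      (forall x, ip x x = 0 -> x = 0) &
      (forall u : nat -> H,
         (forall eps : C, 0 < eps -> exists N, forall m n, (N <= m)%N -> (N <= n)%N ->
            ip (u m - u n) (u m - u n) < eps) ->
         exists l : H, forall eps : C, 0 < eps -> exists N, forall n, (N <= n)%N ->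
            ip (u n - l) (u n - l) < eps)].

Definition bounded (a : H -> H) : Prop :=
  (forall (k : C) x y, a (k *: x + y) = k *: a x + a y) /\
  exists M : C, forall x, ip (a x) (a x) <= M * ip x x.

Definition is_adjoint (a c : H -> H) : Prop := forall x y, ip (a x) y = ip x (c y).

(* maps B(H) -> B(H), represented on all functions but only meaningful on B(H) *)
Definition Bmap := (H -> H) -> (H -> H).

Definition linear_Bmap (T : Bmap) : Prop :=
  (forall a, bounded a -> bounded (T a)) /\
  (forall (k : C) a b, bounded a -> bounded b ->
     T (fun v => k *: a v + b v) = (fun v => k *: T a v + T b v)).

(* positivity of an element of M_n(B(H)), i.e. as an operator on H^n *)
Definition pos_mx n (X : 'I_n -> 'I_n -> H -> H) : Prop :=
  forall xi : 'I_n -> H, 0 <= \sum_(i < n) \sum_(j < n) ip (xi i) (X i j (xi j)).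

Definition completely_positive (T : Bmap) : Prop :=
  forall n (X : 'I_n -> 'I_n -> H -> H),
    (forall i j, bounded (X i j)) -> pos_mx X -> pos_mx (fun i j => T (X i j)).

Definition cp_kernel (L : Type) (A : L -> Prop) (P : L -> L -> Bmap) : Prop :=
  (forall f g, A f -> A g -> linear_Bmap (P f g)) /\
  forall n (fs : 'I_n -> L) (b c : 'I_n -> H -> H),
    (forall j, A (fs j)) -> (forall j, bounded (b j)) -> (forall j, is_adjoint (b j) (c j)) ->
    completely_positive
      (fun x v => \sum_(j < n) \sum_(k < n) c j (P (fs j) (fs k) x (b k v))).

End Hilbert.

Definition image_set (L : Type) (chi : L -> L) (S0 : L -> Prop) : L -> Prop :=
  fun y => exists f, S0 f /\ y = chi f.

(* Main.v *)
Require Import Defs.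
From HB Require Import structures.
From mathcomp Require Import all_boot all_order all_algebra.
From mathcomp Require Import complex.
From mathcomp Require Import reals.
From Stdlib Require Import FunctionalExtensionality Classical.
From mathcomp Require Import ring.
Local Open Scope ring_scope.

Module Aux.
Set Implicit Arguments. Unset Strict Implicit. Unset Printing Implicit Defensive.
Import Order.TTheory GRing.Theory Num.Theory.
Local Open Scope ring_scope.

Section Basic.
Variable R : realType.
Local Notation C := (complex R).
Variable H : lmodType C.
Variable ip : H -> H -> C.
Hypothesis hH : is_hilbert ip.

Lemma ipDZr x y z a : ip x (a *: y + z) = a * ip x y + ip x z.
Proof. by move: hH => [h1 h2 h3 h4 h5]; apply: h1. Qed.
Lemma ipC x y : ip y x = (ip x y)^*.
Proof. by move: hH => [h1 h2 h3 h4 h5]; apply: h2. Qed.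
Lemma ip_ge0 x : 0 <= ip x x.
Proof. by move: hH => [h1 h2 h3 h4 h5]; apply: h3. Qed.
Lemma ip_eq0 x : ip x x = 0 -> x = 0.
Proof. by move: hH => [h1 h2 h3 h4 h5]; apply: h4. Qed.
Lemma ipr0 x : ip x 0 = 0.
Proof. by have := ipDZr x 0 0 (-1); rewrite scaleN1r addNr mulN1r addNr. Qed.
Lemma ipDr x y z : ip x (y + z) = ip x y + ip x z.
Proof. by have := ipDZr x y z 1; rewrite scale1r mul1r. Qed.
Lemma ipZr x y a : ip x (a *: y) = a * ip x y.
Proof. by have := ipDZr x y 0 a; rewrite addr0 ipr0 addr0. Qed.
Lemma ipl0 x : ip 0 x = 0.
Proof. by rewrite ipC ipr0 conjC0. Qed.
Lemma ipDl x y z : ip (y + z) x = ip y x + ip z x.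
Proof. by rewrite (ipC x (y + z)) (ipC x y) (ipC x z) ipDr; apply: rmorphD. Qed.
Lemma ipZl x y a : ip (a *: y) x = a^* * ip y x.
Proof. by rewrite (ipC x (a *: y)) (ipC x y) ipZr; apply: rmorphM. Qed.
Lemma ipNr x y : ip x (- y) = - ip x y.
Proof. by rewrite -scaleN1r ipZr mulN1r. Qed.
Lemma ipNl x y : ip (- y) x = - ip y x.
Proof. by rewrite -scaleN1r ipZl rmorphN1 mulN1r. Qed.
Lemma ipBr x y z : ip x (y - z) = ip x y - ip x z.
Proof. by rewrite ipDr ipNr. Qed.
Lemma ipBl x y z : ip (y - z) x = ip y x - ip z x.
Proof. by rewrite ipDl ipNl. Qed.
Lemma ip_sumr (I : Type) (r : seq I) (Pr : pred I) (F : I -> H) x :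
  ip x (\sum_(i <- r | Pr i) F i) = \sum_(i <- r | Pr i) ip x (F i).
Proof. exact: (big_morph (ip x) (ipDr x) (ipr0 x)). Qed.
Lemma ip_suml (I : Type) (r : seq I) (Pr : pred I) (F : I -> H) x :
  ip (\sum_(i <- r | Pr i) F i) x = \sum_(i <- r | Pr i) ip (F i) x.
Proof. exact: (big_morph (ip^~ x) (fun a b => ipDl x a b) (ipl0 x)). Qed.
Lemma ip_real x : (ip x x)^* = ip x x.
Proof. exact: geC0_conj (ip_ge0 x). Qed.

Lemma CS h v : ip h v * (ip h v)^* <= ip h h * ip v v.
Proof.
have [h0|hn] := eqVneq (ip h h) 0.
  by rewrite h0 mul0r (ip_eq0 h0) ipl0 mul0r.
set n := ip h h; set c := ip h v.
have npos : 0 < n by rewrite lt_def hn ip_ge0.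
have := ip_ge0 (n *: v - c *: h).
have -> : ip (n *: v - c *: h) (n *: v - c *: h) = n * (n * ip v v - c * c^*).
  rewrite !ipBl !ipBr !ipZl !ipZr ip_real -/n -/c (ipC h v) -/c.
  by ring.
by rewrite pmulr_rge0 // subr_ge0.
Qed.

Lemma parallel u v : ip (u + v) (u + v) <= 2 * (ip u u + ip v v).
Proof.
have e : ip (u + v) (u + v) + ip (u - v) (u - v) = 2 * (ip u u + ip v v).
  by rewrite !ipDl !ipDr !ipNl !ipNr; ring.
by rewrite -e lerDl ip_ge0.
Qed.

Lemma bnd_lin a : bounded ip a -> forall k x y, a (k *: x + y) = k *: a x + a y.
Proof. by case. Qed.
Lemma bnd0 a : bounded ip a -> a 0 = 0.
Proof.
move=> ha; have := bnd_lin ha (-1) 0 0.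
by rewrite scaleN1r addNr => ->; rewrite scaleN1r addNr.
Qed.
Lemma bndD a x y : bounded ip a -> a (x + y) = a x + a y.
Proof. by move=> ha; have := bnd_lin ha 1 x y; rewrite !scale1r. Qed.
Lemma bndZ a k x : bounded ip a -> a (k *: x) = k *: a x.
Proof. by move=> ha; have := bnd_lin ha k x 0; rewrite addr0 (bnd0 ha) addr0. Qed.
Lemma bnd_sum a (I : Type) (r : seq I) (Pr : pred I) (F : I -> H) :
  bounded ip a -> a (\sum_(i <- r | Pr i) F i) = \sum_(i <- r | Pr i) a (F i).
Proof. by move=> ha; apply: (big_morph a (fun x y => bndD x y ha) (bnd0 ha)). Qed.

Lemma bounded_ext f g : (forall v, f v = g v) -> bounded ip f -> bounded ip g.
Proof.
move=> e [hl [M hM]]; split.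
  by move=> k x y; rewrite -!e hl.
by exists M => x; rewrite -!e.
Qed.

Lemma bounded_zero : bounded ip (fun _ => 0).
Proof.
split; first by move=> *; rewrite scaler0 addr0.
by exists 0 => x; rewrite ipl0 mul0r.
Qed.

Lemma bounded_comb k a b : bounded ip a -> bounded ip b ->
  bounded ip (fun v => k *: a v + b v).
Proof.
move=> [la [Ma hMa]] [lb [Mb hMb]]; split.
  move=> k' x y; rewrite la lb scalerDr !scalerA [k * k']mulrC.
  by rewrite [k' *: (_ + _)]scalerDr scalerA addrACA.
exists (2 * (k^* * k * Ma + Mb)) => x.
apply: (le_trans (parallel _ _)).
rewrite -[2 * _ * ip x x]mulrA ler_wpM2l // mulrDl ipZl ipZr mulrA.
have kk : 0 <= k^* * k by rewrite mulrC mul_conjC_ge0.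
apply: lerD; last exact: hMb.
by rewrite -[k^* * k * Ma * _]mulrA ler_wpM2l.
Qed.

Lemma bounded_sum (I : Type) (r : seq I) (F : I -> H -> H) :
  (forall i, bounded ip (F i)) -> bounded ip (fun v => \sum_(i <- r) F i v).
Proof.
move=> hF; elim: r => [|i r IH].
  by apply: bounded_ext bounded_zero => v; rewrite big_nil.
apply: bounded_ext (bounded_comb 1 (hF i) IH) => v.
by rewrite big_cons scale1r.
Qed.

Definition rank1 (h u : H) : H -> H := fun v => ip h v *: u.

Lemma bounded_rank1 h u : bounded ip (rank1 h u).
Proof.
split.
  by move=> k x y; rewrite /rank1 ipDZr scalerDl scalerA.
exists (ip h h * ip u u) => x.
rewrite /rank1 ipZl ipZr mulrA [_ * ip h x]mulrC mulrAC.
by rewrite mulrAC [ip h h * _ * _]mulrAC ler_wpM2r ?ip_ge0 ?CS.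
Qed.

Definition Rk (K : Type) (r : seq K) (h u : K -> H) : H -> H :=
  fun v => \sum_(a <- r) rank1 (h a) (u a) v.

Lemma bounded_Rk (K : Type) (r : seq K) h u : bounded ip (@Rk K r h u).
Proof. exact: bounded_sum (fun a => bounded_rank1 (h a) (u a)). Qed.

Lemma adjoint_Rk (K : Type) (r : seq K) h u : is_adjoint ip (@Rk K r h u) (Rk r u h).
Proof.
move=> x y; rewrite /Rk ip_suml ip_sumr; apply: eq_bigr => a _.
by rewrite /rank1 ipZl ipZr -ipC mulrC.
Qed.

Lemma Tsum (T : Bmap H) (I : Type) (r : seq I) (k : I -> C) (F : I -> H -> H) :
  linear_Bmap ip T -> (forall i, bounded ip (F i)) ->
  T (fun v => \sum_(i <- r) k i *: F i v) = fun v => \sum_(i <- r) k i *: T (F i) v.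
Proof.
move=> [hb hl] hF; elim: r => [|i r IH].
  have e : (fun v : H => \sum_(i <- [::]) k i *: F i v) =
           (fun v => (-1) *: (fun _ : H => 0) v + (fun _ : H => 0) v).
    by apply: functional_extensionality => v; rewrite big_nil scaleN1r addNr.
  rewrite e hl; try exact: bounded_zero.
  by apply: functional_extensionality => v; rewrite big_nil scaleN1r addNr.
have bS : bounded ip (fun v => \sum_(i <- r) k i *: F i v).
  by apply: (@bounded_sum _ r (fun i v => k i *: F i v)) => j;
     apply: bounded_ext (bounded_comb (k j) (hF j) bounded_zero) => v; rewrite addr0.
have e : (fun v => \sum_(j <- i :: r) k j *: F j v) =
         (fun v => k i *: F i v + (fun v => \sum_(j <- r) k j *: F j v) v).
  by apply: functional_extensionality => v; rewrite big_cons.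
rewrite e hl // IH; apply: functional_extensionality => v; by rewrite big_cons.
Qed.

End Basic.

Section Scalar.
Variable C : numClosedFieldType.

Lemma cD (x y : C) : (x + y)^* = x^* + y^*. Proof. exact: rmorphD. Qed.
Lemma cM (x y : C) : (x * y)^* = x^* * y^*. Proof. exact: rmorphM. Qed.
Lemma cN (x : C) : (- x)^* = - x^*. Proof. exact: rmorphN. Qed.
Lemma cB (x y : C) : (x - y)^* = x^* - y^*. Proof. exact: rmorphB. Qed.
Lemma cV (x : C) : (x^-1)^* = (x^*)^-1. Proof. exact: fmorphV. Qed.
Lemma csum (I : Type) (r : seq I) (Pr : pred I) (F : I -> C) :
  (\sum_(i <- r | Pr i) F i)^* = \sum_(i <- r | Pr i) (F i)^*.
Proof. exact: rmorph_sum. Qed.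

Variable I : finType.

Definition delta (k : I) : I -> C := fun i => (i == k)%:R.

Lemma sdelta_r (f : I -> C) k : \sum_j f j * delta k j = f k.
Proof.
rewrite (bigD1 k) //= /delta eqxx mulr1 big1 ?addr0 // => j /negbTE ->.
by rewrite mulr0.
Qed.
Lemma sdelta_l (f : I -> C) k : \sum_j delta k j * f j = f k.
Proof. by rewrite -[RHS](sdelta_r f k); apply: eq_bigr => j _; rewrite mulrC. Qed.
Lemma delta_conj k i : (delta k i)^* = delta k i.
Proof. exact: conjC_nat. Qed.

Definition qf (x : I -> I -> C) (z : I -> C) := \sum_i \sum_j (z i)^* * x i j * z j.
Definition psd (x : I -> I -> C) := forall z, 0 <= qf x z.

Lemma qf_shift x z t k :
  qf x (fun i => z i + t * delta k i) =
  qf x z + t * (\sum_i (z i)^* * x i k) + t^* * (\sum_j x k j * z j) + t^* * t * x k k.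
Proof.
rewrite /qf.
have e1 : forall i, \sum_j (z i + t * delta k i)^* * x i j * (z j + t * delta k j) =
   (z i)^* * (\sum_j x i j * z j) + t * ((z i)^* * x i k) + delta k i * (t^* * (\sum_j x i j * z j) + t^* * t * x i k).
  move=> i; rewrite cD cM delta_conj.
  have -> : \sum_j ((z i)^* + t^* * delta k i) * x i j * (z j + t * delta k j) =
     \sum_j (((z i)^* + t^* * delta k i) * (x i j * z j) + ((z i)^* + t^* * delta k i) * t * (x i j * delta k j)).
    by apply: eq_bigr => j _; ring.
  rewrite big_split /= -!mulr_sumr sdelta_r; ring.
rewrite (eq_bigr _ (fun i _ => e1 i)) !big_split /= sdelta_l -!mulr_sumr.
rewrite addrA; congr (_ + _ + _ + _); apply: eq_bigr => i _.
by rewrite mulr_sumr; apply: eq_bigr => j _; rewrite mulrA.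
Qed.

Lemma qf2 x k l s t :
  qf x (fun i => s * delta k i + t * delta l i) =
  s^* * s * x k k + s^* * t * x k l + t^* * s * x l k + t^* * t * x l l.
Proof.
rewrite (qf_shift x (fun i => s * delta k i) t l).
have -> : qf x (fun i => s * delta k i) = s^* * s * x k k.
  rewrite /qf (eq_bigr (fun i => delta k i * (s^* * s * x i k))) ?sdelta_l //.
  move=> i _.
  rewrite (eq_bigr (fun j => (s^* * delta k i * s * x i j) * delta k j)) ?sdelta_r.
    by ring.
  by move=> j _; rewrite cM delta_conj; ring.
rewrite (eq_bigr (fun i => s^* * (x i l * delta k i))); last first.
  by move=> i _; rewrite cM delta_conj; ring.
rewrite -mulr_sumr (eq_bigr (fun i => x i l * delta k i)) // sdelta_r.
rewrite (eq_bigr (fun j => s * (x l j * delta k j))); last by move=> j _; ring.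
rewrite -mulr_sumr sdelta_r; ring.
Qed.

Lemma psd_diag x k : psd x -> 0 <= x k k.
Proof.
move=> hx; have := hx (fun i => 1 * delta k i + 0 * delta k i).
by rewrite qf2 conjC1 conjC0 !(mulr1, mul1r, mulr0, mul0r, addr0).
Qed.

Lemma psd_herm x k l : psd x -> x l k = (x k l)^*.
Proof.
move=> hx.
have rk := geC0_conj (psd_diag k hx); have rl := geC0_conj (psd_diag l hx).
have e1 := geC0_conj (hx (fun i => 1 * delta k i + 1 * delta l i)).
rewrite qf2 conjC1 !mul1r !cD rk rl in e1.
have e2 := geC0_conj (hx (fun i => 1 * delta k i + 'i * delta l i)).
rewrite qf2 conjC1 !(mulr1, mul1r) conjCi in e2.
rewrite !cD !cM !cN conjCi !opprK rk rl in e2.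
set A := x k l in e1 e2 *; set B := x l k in e1 e2 *.
have h1 : A^* + B^* - A - B = 0.
  have -> : A^* + B^* - A - B = (x k k + A^* + B^* + x l l) - (x k k + A + B + x l l) by ring.
  by rewrite e1 subrr.
have h2 : 'i * (B^* + B - A^* - A) = 0.
  set L2 := (X in X = _) in e2; set R2 := (X in _ = X) in e2.
  have -> : 'i * (B^* + B - A^* - A) = L2 - R2 by rewrite /L2 /R2; ring.
  by rewrite e2 subrr.
have inz : ('i : C) != 0 by rewrite -normr_eq0 normCi oner_eq0.
have two : (2 : C) != 0 by rewrite pnatr_eq0.
move/eqP: h2; rewrite mulf_eq0 (negbTE inz) /= => /eqP h2.
apply/eqP; rewrite -subr_eq0; apply/eqP.
have : 2 * (B - A^*) = 0.
  have -> : 2 * (B - A^*) = (B^* + B - A^* - A) - (A^* + B^* - A - B) by ring.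
  by rewrite h1 h2 subrr.
by move/eqP; rewrite mulf_eq0 (negbTE two) /= => /eqP.
Qed.


Lemma psd_row0 x k l : psd x -> x k k = 0 -> x k l = 0.
Proof.
move=> hx hkk; apply/eqP/negPn/negP => ha.
have hl := psd_diag l hx.
have hr : 0 <= (x k l * (x k l)^*)^-1 by rewrite invr_ge0 mul_conjC_ge0.
set r := (x k l * (x k l)^*)^-1 in hr.
have anz : x k l * (x k l)^* != 0 by rewrite mul_conjC_eq0.
set s := - (x l l + 1) * x k l * r.
have := hx (fun i => s * delta k i + 1 * delta l i).
rewrite qf2 hkk (psd_herm k l hx) conjC1 !cM cN cD conjC1 (geC0_conj hl) (geC0_conj hr).
have -> : (- (x l l + 1) * (x k l)^* * r * s * 0 + (- (x l l + 1) * (x k l)^* * r) * 1 * x k l +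
   1 * s * (x k l)^* + 1 * 1 * x l l) = - (x l l + 2).
  rewrite /s /r; field; by move: anz; rewrite mulf_eq0 negb_or andbC.
move=> h; have : 0 < x l l + 2 by apply: (le_lt_trans hl); rewrite ltrDl ltr0n.
by rewrite -oppr_lt0 => /lt_le_trans /(_ h); rewrite ltxx.
Qed.

Lemma schur_psd x k : psd x -> x k k != 0 ->
  psd (fun i j => x i j - x i k * x k j / x k k).
Proof.
move=> hx hk z.
set a := \sum_j x k j * z j.
have hb : \sum_i (z i)^* * x i k = a^*.
  by rewrite /a csum; apply: eq_bigr => i _; rewrite cM -(psd_herm k i hx) mulrC.
have rk := geC0_conj (psd_diag k hx).
have := hx (fun i => z i + (- a / x k k) * delta k i).
rewrite qf_shift hb cM cN cV rk.
have -> : qf x z + - a / x k k * a^* + - a^* / x k k * a + - a^* / x k k * (- a / x k k) * x k k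
   = qf x z - a^* * a / x k k by field.
suff -> : qf (fun i j => x i j - x i k * x k j / x k k) z = qf x z - a^* * a / x k k by [].
have e : \sum_i \sum_j (z i)^* * (x i k * x k j / x k k) * z j = a^* * a / x k k.
  rewrite -hb -mulrA mulr_suml; apply: eq_bigr => i _.
  rewrite /a mulr_suml mulr_sumr; apply: eq_bigr => j _; ring.
rewrite /qf -e -sumrB; apply: eq_bigr => i _; rewrite -sumrB; apply: eq_bigr => j _; ring.
Qed.

Lemma psd_trace_aux (c : I -> I -> C) : psd c -> forall (s : seq I) x, psd x ->
  (forall i j, i \notin s -> x i j = 0) -> 0 <= \sum_i \sum_j x i j * c i j.
Proof.
move=> hc; elim=> [|k s IH] x hx hs.
  by rewrite big1 // => i _; rewrite big1 // => j _; rewrite hs ?mul0r.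
have [hk|hk] := eqVneq (x k k) 0.
  apply: IH => // i j; case: (eqVneq i k) => [-> _|ik his]; first exact: psd_row0.
  by apply: hs; rewrite in_cons negb_or ik.
set x' := fun i j => x i j - x i k * x k j / x k k.
have hx' : psd x' := schur_psd hx hk.
have hs' : forall i j, i \notin s -> x' i j = 0.
  move=> i j his; rewrite /x'; case: (eqVneq i k) => [->|ik].
    by rewrite mulrAC divff // mul1r subrr.
  have hi : i \notin k :: s by rewrite in_cons negb_or ik.
  by rewrite (hs _ _ hi) (hs _ _ hi) !mul0r subrr.
have e : \sum_i \sum_j x i j * c i j = \sum_i \sum_j x' i j * c i j +
   (x k k)^-1 * \sum_i \sum_j ((x k i)^* * c i j * x k j).
  rewrite mulr_sumr -big_split; apply: eq_bigr => i _.
  rewrite mulr_sumr -big_split; apply: eq_bigr => j _.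
  rewrite /x' -(psd_herm k i hx) /=; ring.
rewrite e; apply: addr_ge0; first exact: IH.
apply: mulr_ge0; first by rewrite invr_ge0 psd_diag.
exact: (hc (fun i => x k i)).
Qed.

Lemma psd_trace (x c : I -> I -> C) : psd x -> psd c -> 0 <= \sum_i \sum_j x i j * c i j.
Proof.
move=> hx hc; apply: (@psd_trace_aux c hc (enum I) x hx) => i j.
by rewrite mem_enum.
Qed.

End Scalar.

Section Sums.
Variable V : nmodType.
Lemma swap4 (I1 I2 I3 I4 : finType) (G : I1 -> I2 -> I3 -> I4 -> V) :
  \sum_a \sum_b \sum_c \sum_d G a b c d = \sum_c \sum_d \sum_a \sum_b G a b c d.
Proof.
transitivity (\sum_a \sum_c \sum_b \sum_d G a b c d).
  by apply: eq_bigr => a _; exact: exchange_big.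
transitivity (\sum_a \sum_c \sum_d \sum_b G a b c d).
  by apply: eq_bigr => a _; apply: eq_bigr => c _; exact: exchange_big.
rewrite exchange_big; apply: eq_bigr => c _; exact: exchange_big.
Qed.

Lemma sum_enum_val (K : finType) (F : K -> V) :
  \sum_(p < #|K|) F (enum_val p) = \sum_a F a.
Proof. by rewrite [RHS](reindex (fun p : 'I_#|K| => enum_val p)) //; exact: onW_bij (enum_val_bij K). Qed.

Lemma sum4_enum (T K : finType) (G : T -> T -> K -> K -> V) :
  \sum_(j < #|T|) \sum_(k < #|T|) \sum_(p < #|K|) \sum_(q < #|K|)
     G (enum_val j) (enum_val k) (enum_val p) (enum_val q) =
  \sum_I \sum_J \sum_a \sum_b G I J a b.
Proof.
rewrite -(sum_enum_val (fun I => \sum_J \sum_a \sum_b G I J a b)).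
apply: eq_bigr => j _.
rewrite -(sum_enum_val (fun J => \sum_a \sum_b G _ J a b)).
apply: eq_bigr => k _.
rewrite -(sum_enum_val (fun a => \sum_b G _ _ a b)).
apply: eq_bigr => p _.
by rewrite -(sum_enum_val (fun b => G _ _ _ b)).
Qed.
Lemma sum_pairs (K D : finType) (F : K * D -> K * D -> V) :
  \sum_i \sum_j F i j = \sum_p \sum_q \sum_(ab : D * D) F (p, ab.1) (q, ab.2).
Proof.
transitivity (\sum_p \sum_q \sum_a \sum_b F (p, a) (q, b)); last first.
  apply: eq_bigr => p _; apply: eq_bigr => q _.
  exact: (pair_bigA _ (fun a b => F (p, a) (q, b))).
transitivity (\sum_p \sum_a \sum_q \sum_b F (p, a) (q, b)); last first.
  by apply: eq_bigr => p _; exact: exchange_big.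
rewrite (pair_bigA _ (fun p a => \sum_q \sum_b F (p, a) (q, b))).
apply: eq_bigr => -[p a] _ /=.
by rewrite (pair_bigA _ (fun q b => F (p, a) (q, b))); apply: eq_bigr => -[q b].
Qed.
End Sums.

Section Crux.
Variable R : realType.
Local Notation C := (complex R).
Variable H : lmodType C.
Variable ip : H -> H -> C.
Hypothesis hH : is_hilbert ip.
Variables (L : Type) (A : L -> Prop) (P : L -> L -> Bmap H).
Hypothesis hP : cp_kernel ip A P.

Definition posK (K : finType) (X : K -> K -> H -> H) :=
  forall xi : K -> H, 0 <= \sum_a \sum_b ip (xi a) (X a b (xi b)).

Definition orth (K : finType) (g : K -> H) :=
  (forall a, ip (g a) (g a) != 0) /\ (forall a b, a != b -> ip (g a) (g b) = 0).

Lemma direct (T K : finType) (lab : T -> L) (hlab : forall I, A (lab I))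
  (g : K -> H) (hg : orth g) (X : K -> K -> H -> H)
  (hXb : forall a b, bounded ip (X a b)) (hX : posK X) (u : T -> K -> H) :
  0 <= \sum_I \sum_J \sum_a \sum_b ip (u I a) (P (lab I) (lab J) (X a b) (u J b)).
Proof.
set h := fun a => (ip (g a) (g a))^-1 *: g a.
have hhg : forall a b, ip (h a) (g b) = (a == b)%:R.
  move=> a b; rewrite /h (ipZl hH) cV (ip_real hH).
  case: eqVneq => [->|ab]; first by rewrite mulVf //; case: hg.
  by rewrite (hg.2 a b ab) mulr0.
have Rkg : forall (v : K -> H) b, Rk ip (index_enum K) h v (g b) = v b.
  move=> v b; rewrite /Rk /rank1 (bigD1 b) //= hhg eqxx scale1r big1 ?addr0 //.
  by move=> a /negbTE ab; rewrite hhg ab scale0r.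
set fs := fun k : 'I_#|T| => lab (enum_val k).
set bb := fun k : 'I_#|T| => Rk ip (index_enum K) h (u (enum_val k)).
set cc := fun k : 'I_#|T| => Rk ip (index_enum K) (u (enum_val k)) h.
have hX' : pos_mx ip (fun p q : 'I_#|K| => X (enum_val p) (enum_val q)).
  move=> xi; have := hX (fun a => xi (enum_rank a)).
  rewrite -(sum_enum_val (fun a => \sum_b ip (xi (enum_rank a)) (X a b (xi (enum_rank b))))).
  under eq_bigr => p _ do rewrite -(sum_enum_val (fun b => ip (xi (enum_rank _)) (X _ b (xi (enum_rank b))))).
  by under eq_bigr => p _ do under eq_bigr => q _ do rewrite !enum_valK.
have := hP.2 #|T| fs bb cc (fun j => hlab _) (fun j => bounded_Rk hH _ _ _)
  (fun j => adjoint_Rk hH _ _ _) #|K| (fun p q => X (enum_val p) (enum_val q))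
  (fun p q => hXb _ _) hX' (fun p => g (enum_val p)).
move=> hyp.
rewrite -(sum4_enum (fun I J a b => ip (u I a) (P (lab I) (lab J) (X a b) (u J b)))) -swap4.
apply: (le_trans hyp); rewrite le_eqVlt; apply/orP; left; apply/eqP.
apply: eq_bigr => p _; apply: eq_bigr => q _; rewrite (ip_sumr hH).
apply: eq_bigr => j _; rewrite (ip_sumr hH); apply: eq_bigr => k _.
by rewrite /cc -(adjoint_Rk hH (index_enum K) h (u (enum_val j))) /bb !Rkg.
Qed.

Lemma ortho_ext k : (exists g : 'I_k -> H, orth g) \/
  (exists d (g : 'I_d -> H), orth g /\
     forall x, x = \sum_a (ip (g a) x / ip (g a) (g a)) *: g a).
Proof.
elim: k => [|k [[g hg]|hr]]; last by right.
- left; exists (fun _ => 0); split; by move=> [].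
- case: (classic (forall x, x = \sum_a (ip (g a) x / ip (g a) (g a)) *: g a)) => [hall|hn].
    by right; exists k, g.
  move/not_all_ex_not: hn => [x hx].
  set r := x - \sum_a (ip (g a) x / ip (g a) (g a)) *: g a.
  have rorth : forall a, ip (g a) r = 0.
    move=> a; rewrite /r (ipBr hH) (ip_sumr hH) (bigD1 a) //= big1 ?addr0.
      by rewrite (ipZr hH) mulfVK ?subrr //; case: hg.
    by move=> b ba; rewrite (ipZr hH) (hg.2 a b) ?mulr0 // eq_sym.
  have rnz : ip r r != 0.
    apply/eqP => /(ip_eq0 hH) r0; apply: hx; apply/eqP; rewrite -subr_eq0; apply/eqP; exact: r0.
  left; exists (fun i : 'I_k.+1 => if unlift ord_max i is Some j then g j else r).
  split.
    move=> a; case: (unliftP ord_max a) => [j _|_] //; by case: hg.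
  move=> a b ab.
  case: (unliftP ord_max a) ab => [j ->|->]; case: (unliftP ord_max b) => [j' ->|->] //; rewrite ?liftK ?unlift_none.
  + move=> ab; apply: hg.2; by apply: contra ab => /eqP ->.
  + by rewrite (ipC hH) rorth conjC0.
  + by rewrite eqxx.
Qed.

Lemma posK_E (d : nat) (g : 'I_d -> H) :
  posK (fun a b => rank1 ip (g b) (g a)).
Proof.
move=> xi; rewrite /rank1.
have -> : \sum_a \sum_b ip (xi a) (ip (g b) (xi b) *: g a) =
   (\sum_b ip (g b) (xi b))^* * (\sum_b ip (g b) (xi b)).
  rewrite csum mulr_suml; apply: eq_bigr => a _; rewrite mulr_sumr.
  by apply: eq_bigr => b _; rewrite (ipZr hH) -(ipC hH) mulrC.
by rewrite mulrC mul_conjC_ge0.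
Qed.

Lemma cpk (T K : finType) (lab : T -> L) (hlab : forall I, A (lab I))
  (X : K -> K -> H -> H)
  (hXb : forall a b, bounded ip (X a b)) (hX : posK X) (u : T -> K -> H) :
  0 <= \sum_I \sum_J \sum_a \sum_b ip (u I a) (P (lab I) (lab J) (X a b) (u J b)).
Proof.
case: (ortho_ext #|K|) => [[g hg]|[d [g [hg hexp]]]].
  apply: (direct hlab (g := fun a => g (enum_rank a))) => //; split.
    by move=> a; case: hg.
  by move=> a b ab; apply: hg.2; apply: contra ab => /eqP/enum_rank_inj ->.
set n := fun a => ip (g a) (g a).
have nreal : forall a, (n a)^* = n a by move=> a; exact: ip_real.
set E := fun a b : 'I_d => rank1 ip (g b) (g a).
have Eb : forall a b, bounded ip (E a b) by move=> a b; exact: bounded_rank1.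
set xc := fun i j : K * 'I_d => ip (g i.2) (X i.1 j.1 (g j.2)) / (n i.2 * n j.2).
have Xdec : forall p q, X p q =
    (fun v => \sum_(ab : 'I_d * 'I_d) xc (p, ab.1) (q, ab.2) *: E ab.1 ab.2 v).
  move=> p q; apply: functional_extensionality => v.
  rewrite {1}(hexp v) (bnd_sum _ _ _ (hXb p q)).
  under eq_bigr => b _ do rewrite (bndZ _ _ (hXb p q)) (hexp (X p q (g b))) scaler_sumr.
  rewrite exchange_big (pair_bigA _ (fun a b => (ip (g b) v / ip (g b) (g b)) *:
       ((ip (g a) (X p q (g b)) / ip (g a) (g a)) *: g a))).
  apply: eq_bigr => -[a b] _ /=; rewrite /E /rank1 /xc /= !scalerA; congr (_ *: _).
  by rewrite /n invfM; ring.
have hPX : forall I J p q v, P (lab I) (lab J) (X p q) v =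
    \sum_(ab : 'I_d * 'I_d) xc (p, ab.1) (q, ab.2) *: P (lab I) (lab J) (E ab.1 ab.2) v.
  move=> I J p q v.
  by rewrite Xdec (Tsum hH _ _ (hP.1 _ _ (hlab I) (hlab J)) (fun ab => Eb ab.1 ab.2)).
set cc := fun i j : K * 'I_d =>
  \sum_I \sum_J ip (u I i.1) (P (lab I) (lab J) (E i.2 j.2) (u J j.1)).
have key : \sum_I \sum_J \sum_a \sum_b ip (u I a) (P (lab I) (lab J) (X a b) (u J b)) =
           \sum_i \sum_j xc i j * cc i j.
  rewrite sum_pairs /cc /=; symmetry.
  under eq_bigr => p _ do under eq_bigr => q _ do under eq_bigr => ab _ do rewrite mulr_sumr.
  under eq_bigr => p _ do under eq_bigr => q _ do under eq_bigr => ab _ do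
    under eq_bigr => I _ do rewrite mulr_sumr.
  have sw : forall p q, \sum_(ab : 'I_d * 'I_d) \sum_I \sum_J
      xc (p, ab.1) (q, ab.2) * ip (u I p) (P (lab I) (lab J) (E ab.1 ab.2) (u J q)) =
      \sum_I \sum_J \sum_(ab : 'I_d * 'I_d)
      xc (p, ab.1) (q, ab.2) * ip (u I p) (P (lab I) (lab J) (E ab.1 ab.2) (u J q)).
    move=> p q; rewrite exchange_big; apply: eq_bigr => I _; exact: exchange_big.
  under eq_bigr => p _ do under eq_bigr => q _ do rewrite sw.
  rewrite swap4; apply: eq_bigr => I _; apply: eq_bigr => J _.
  apply: eq_bigr => p _; apply: eq_bigr => q _.
  rewrite hPX (ip_sumr hH); apply: eq_bigr => ab _; by rewrite (ipZr hH).
rewrite key; apply: psd_trace.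
  move=> z; rewrite /qf sum_pairs.
  set xi := fun p => \sum_a (z (p, a) / n a) *: g a.
  apply: (le_trans (hX xi)); rewrite le_eqVlt; apply/orP; left; apply/eqP.
  apply: eq_bigr => p _; apply: eq_bigr => q _.
  rewrite /xi (bnd_sum _ _ _ (hXb p q)) (ip_suml hH).
  under eq_bigr => a _ do rewrite (ip_sumr hH).
  rewrite (pair_bigA _ (fun a b => ip ((z (p, a) / n a) *: g a) (X p q ((z (q, b) / n b) *: g b)))).
  apply: eq_bigr => -[a b] _ /=.
  rewrite (bndZ _ _ (hXb p q)) (ipZl hH) (ipZr hH) cM cV nreal /xc /= invfM; ring.
move=> z.
set w := fun I a => \sum_p z (p, a) *: u I p.
have PEb : forall I J a b, bounded ip (P (lab I) (lab J) (E a b)).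
  by move=> I J a b; apply: (hP.1 _ _ (hlab I) (hlab J)).1; exact: Eb.
have eqA : qf cc z = \sum_p \sum_q \sum_a \sum_b \sum_I \sum_J
    (z (p, a))^* * (z (q, b) * ip (u I p) (P (lab I) (lab J) (E a b) (u J q))).
  rewrite /qf sum_pairs; apply: eq_bigr => p _; apply: eq_bigr => q _.
  rewrite (pair_bigA _ (fun a b => \sum_I \sum_J
    (z (p, a))^* * (z (q, b) * ip (u I p) (P (lab I) (lab J) (E a b) (u J q))))).
  apply: eq_bigr => -[a b] _ /=; rewrite /cc /= mulr_sumr mulr_suml.
  apply: eq_bigr => I _; rewrite mulr_sumr mulr_suml; apply: eq_bigr => J _; ring.
have eqB : \sum_I \sum_J \sum_a \sum_b ip (w I a) (P (lab I) (lab J) (E a b) (w J b)) =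
   \sum_I \sum_J \sum_a \sum_b \sum_p \sum_q
    (z (p, a))^* * (z (q, b) * ip (u I p) (P (lab I) (lab J) (E a b) (u J q))).
  apply: eq_bigr => I _; apply: eq_bigr => J _; apply: eq_bigr => a _; apply: eq_bigr => b _.
  rewrite /w (bnd_sum _ _ _ (PEb I J a b)) (ip_suml hH); apply: eq_bigr => p _.
  rewrite (ip_sumr hH); apply: eq_bigr => q _.
  by rewrite (bndZ _ _ (PEb I J a b)) (ipZl hH) (ipZr hH).
rewrite eqA; apply: (le_trans (direct hlab hg Eb (posK_E g) w)).
rewrite eqB le_eqVlt; apply/orP; left; apply/eqP; symmetry.
transitivity (\sum_p \sum_q \sum_I \sum_J \sum_a \sum_b
    (z (p, a))^* * (z (q, b) * ip (u I p) (P (lab I) (lab J) (E a b) (u J q)))).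
  by apply: eq_bigr => p _; apply: eq_bigr => q _; rewrite swap4.
rewrite swap4; apply: eq_bigr => I _; apply: eq_bigr => J _; exact: swap4.
Qed.

End Crux.
Lemma sum_pairs2 (V : nmodType) (A B : finType) (F : A * B -> A * B -> V) :
  \sum_i \sum_j F i j = \sum_a \sum_b \sum_a' \sum_b' F (a, b) (a', b').
Proof.
rewrite (pair_bigA _ (fun a b => \sum_a' \sum_b' F (a, b) (a', b'))).
apply: eq_bigr => -[a b] _ /=.
by rewrite (pair_bigA _ (fun a' b' => F (a, b) (a', b'))); apply: eq_bigr => -[a' b'].
Qed.


Theorem lemma10_aux (R : realType) (H : lmodType (complex R)) (ip : H -> H -> complex R)
    (L : Type) (S0 : L -> Prop) (chiRS chiST : L -> L)
    (Q P : L -> L -> Bmap H) :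
  is_hilbert ip ->
  cp_kernel ip (image_set chiRS S0) Q ->
  cp_kernel ip (image_set chiST S0) P ->
  cp_kernel ip S0 (fun f g x => Q (chiRS f) (chiRS g) (P (chiST f) (chiST g) x)).
Proof.
move=> hH hQ hP.
have AQ : forall f, S0 f -> image_set chiRS S0 (chiRS f) by move=> f hf; exists f.
have AP : forall f, S0 f -> image_set chiST S0 (chiST f) by move=> f hf; exists f.
split.
  move=> f g hf hg.
  have [Pb Pl] := hP.1 _ _ (AP f hf) (AP g hg).
  have [Qb Ql] := hQ.1 _ _ (AQ f hf) (AQ g hg).
  split; first by move=> a ha; exact: Qb (Pb a ha).
  by move=> k a b ha hb /=; rewrite Pl //; exact: Ql (Pb _ ha) (Pb _ hb).
move=> n fs b c hfs hb hc m X hXb hX xi.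
set Z := fun i j : 'I_n * 'I_m => P (chiST (fs i.1)) (chiST (fs j.1)) (X i.2 j.2).
have hZb : forall i j, bounded ip (Z i j).
  by move=> i j; apply: (hP.1 _ _ (AP _ (hfs i.1)) (AP _ (hfs j.1))).1; exact: hXb.
have hZ : posK ip Z.
  move=> ksi.
  have := cpk hH hP (lab := fun j => chiST (fs j)) (fun j => AP _ (hfs j)) hXb hX
    (fun I p => ksi (I, p)).
  rewrite sum_pairs2; congr (0 <= _); apply: eq_bigr => I _.
  rewrite exchange_big; apply: eq_bigr => p _; apply: eq_bigr => J _.
  by apply: eq_bigr => q _.
set u := fun i a : 'I_n * 'I_m => if a == i then b i.1 (xi i.2) else 0.
have := cpk hH hQ (lab := fun i : 'I_n * 'I_m => chiRS (fs i.1))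
   (fun i => AQ _ (hfs i.1)) hZb hZ u.
have QZb : forall i j a b' : 'I_n * 'I_m, bounded ip (Q (chiRS (fs i.1)) (chiRS (fs j.1)) (Z a b')).
  by move=> i j a b0; exact: (hQ.1 _ _ (AQ _ (hfs i.1)) (AQ _ (hfs j.1))).1 _ (hZb a b0).
have coll : forall I J, \sum_a \sum_b ip (u I a)
     (Q (chiRS (fs I.1)) (chiRS (fs J.1)) (Z a b) (u J b)) =
   ip (b I.1 (xi I.2)) (Q (chiRS (fs I.1)) (chiRS (fs J.1)) (Z I J) (b J.1 (xi J.2))).
  move=> I J; rewrite (bigD1 I) //= [X in _ + X]big1 ?addr0; last first.
    move=> a /negbTE aI; apply: big1 => b' _; by rewrite /u aI (ipl0 hH).
  rewrite (bigD1 J) //= [X in _ + X]big1 ?addr0; last first.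
    move=> b' /negbTE bJ; by rewrite /u bJ /= (bnd0 (QZb I J I b')) (ipr0 hH).
  by rewrite /u !eqxx.
under eq_bigr => I _ do under eq_bigr => J _ do rewrite coll.
move=> hyp; apply: (le_trans hyp); rewrite le_eqVlt; apply/orP; left; apply/eqP.
rewrite sum_pairs2; symmetry.
under eq_bigr => p _ do under eq_bigr => q _ do rewrite (ip_sumr hH).
under eq_bigr => p _ do under eq_bigr => q _ do under eq_bigr => j _ do rewrite (ip_sumr hH).
under eq_bigr => p _ do under eq_bigr => q _ do under eq_bigr => j _ do
  under eq_bigr => k _ do rewrite -hc.
rewrite (swap4 (fun p q j k => ip (b j (xi p)) (Q (chiRS (fs j)) (chiRS (fs k))
                   (P (chiST (fs j)) (chiST (fs k)) (X p q)) (b k (xi q))))).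
apply: eq_bigr => j _; rewrite exchange_big; apply: eq_bigr => p _.
by apply: eq_bigr => k _; apply: eq_bigr => q _.
Qed.

End Aux.

Theorem lemma10 (R : realType) (H : lmodType (complex R)) (ip : H -> H -> complex R)
    (L : Type) (S0 : L -> Prop) (chiRS chiST : L -> L)
    (Q P : L -> L -> Bmap H) :
  is_hilbert ip ->
  cp_kernel ip (image_set chiRS S0) Q ->
  cp_kernel ip (image_set chiST S0) P ->
  cp_kernel ip S0 (fun f g x => Q (chiRS f) (chiRS g) (P (chiST f) (chiST g) x)).
Proof. exact: Aux.lemma10_aux. Qed.
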